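(* Let $x,y>0$, $z\ge 0$, $p>0$ (the approximations are intended for the regime $z,p\ll x,y$). Let $a=(x+y)/2$, $g=\sqrt{xy}$, $b=\sqrt{3p(p+2z)}/2$, $d=(z+2p)/3$. Then $$R_J(x,y,z,p)=\frac3g R_C(z,p)-\frac{3\theta}{g-p}\left[R_C(z,g)-\frac pg R_C(z,p)\right],$$ where $1\le\theta\le a/g$ with equalities iff $x=y$; in the complete case $z=0$ this reduces to $$R_J(x,y,0,p)=\frac{3\pi}{2\sqrt{xyp}}\left(1-\frac{\theta\sqrt p}{\sqrt g+\sqrt p}\right)$$ with $\theta$ as before. Moreover, $$R_J(x,y,z,p)=\frac3g R_C(z,p)-\frac{6}{xy}R_G(x,y,0)+\frac{3\pi\theta'}{2xy},\quad \frac{\sqrt b}{1+\sqrt{b/g}}<\theta'<\frac{3a}{2g}\,\frac{\sqrt d}{1+\sqrt{d/g}}.$$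
   Context: For $x,y,z\ge 0$ with at most one zero and $p>0$: $R_J(x,y,z,p)=\frac32\int_0^\infty[(t+x)(t+y)(t+z)]^{-1/2}(t+p)^{-1}\,dt$; $R_G(x,y,z)=\frac14\int_0^\infty[(t+x)(t+y)(t+z)]^{-1/2}\left(\frac{x}{t+x}+\frac{y}{t+y}+\frac{z}{t+z}\right)t\,dt$. For $x\ge0$, $y>0$: $R_C(x,y)=\frac12\int_0^\infty(t+x)^{-1/2}(t+y)^{-1}\,dt$. *)

(* Defs.v *)
From Stdlib Require Import Reals.
From Coquelicot Require Import Coquelicot.
Open Scope R_scope.

(* Improper integral over (0, +oo): lower end is approached from the right
   (the integrands may be singular at t = 0 when a variable vanishes),
   upper end is +oo. *)
Definition int0inf (f : R -> R) : R :=
  RInt_gen f (at_right 0) (Rbar_locally p_infty).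

Definition RC (x y : R) : R :=
  / 2 * int0inf (fun t => / sqrt (t + x) * / (t + y)).

Definition RJ (x y z p : R) : R :=
  3 / 2 * int0inf (fun t => / sqrt ((t + x) * (t + y) * (t + z)) * / (t + p)).

Definition RG (x y z : R) : R :=
  / 4 * int0inf (fun t => / sqrt ((t + x) * (t + y) * (t + z)) *
                          (x / (t + x) + y / (t + y) + z / (t + z)) * t).

(* Main.v *)
Require Import Defs.
From Stdlib Require Import Reals Lra Psatz Classical.
From Coquelicot Require Import Coquelicot.
Open Scope R_scope.

Definition IG (f : R -> R) (l : R) :=
  is_RInt_gen f (at_right 0) (Rbar_locally p_infty) l.
Definition C0 (f : R -> R) := forall t, 0 < t -> continuous f t.

Lemma ball_R (c e y : R) : ball c e y <-> Rabs (y - c) < e.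
Proof. split; intro H; exact H. Qed.

Lemma IG_elim f l : IG f l -> forall eps, 0 < eps ->
  exists u0 v0, 0 < u0 /\ forall u v, 0 < u < u0 -> v0 < v ->
     exists y, is_RInt f u v y /\ Rabs (y - l) < eps.
Proof.
  intros H eps Heps.
  destruct (H (fun y => Rabs (y - l) < eps)) as [Q S HQ HS HQS].
  { exists (mkposreal eps Heps). intros y Hy. exact Hy. }
  destruct HQ as [d Hd]. destruct HS as [M HM].
  exists d, M. split; [apply cond_pos|].
  intros u v Hu Hv.
  apply (HQS u v).
  - apply Hd; [|lra]. assert (Hy' : Rabs (u - 0) < d) by (rewrite Rminus_0_r, Rabs_pos_eq; lra). exact Hy'.
  - apply HM; exact Hv.
Qed.

Lemma IG_intro f L :
  (forall u v, 0 < u -> u < v -> ex_RInt f u v) ->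
  (forall eps, 0 < eps -> exists u0 v0, 0 < u0 /\ u0 < v0 /\
     forall u v, 0 < u < u0 -> v0 < v -> Rabs (RInt f u v - L) < eps) ->
  IG f L.
Proof.
  intros Hex H P [eps HP].
  destruct (H eps (cond_pos eps)) as (u0 & v0 & Hu0 & Huv & Hb).
  apply Filter_prod with (fun u => 0 < u < u0) (fun v => v0 < v).
  - exists (mkposreal u0 Hu0). intros y Hy Hy0.
    assert (Hy' : Rabs (y - 0) < u0) by exact Hy.
    rewrite Rminus_0_r, Rabs_pos_eq in Hy'; lra.
  - exists v0. auto.
  - intros u v Hu Hv. exists (RInt f u v). split.
    + simpl. exact (RInt_correct f u v (Hex u v ltac:(lra) ltac:(lra))).
    + apply HP. change (Rabs (RInt f u v - L) < eps). apply Hb; auto.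
Qed.

Lemma plusR (a b : R) : plus a b = a + b.
Proof. reflexivity. Qed.

Lemma C0_ex_RInt f u v : C0 f -> 0 < u -> u <= v -> ex_RInt f u v.
Proof.
  intros Hc Hu Huv. apply (ex_RInt_continuous (V:=R_CompleteNormedModule)). intros z Hz.
  apply Hc. rewrite Rmin_left in Hz; lra.
Qed.

Lemma RInt_mono_dom f u v u' v' : C0 f -> (forall t, 0 < t -> 0 <= f t) ->
  0 < u' -> u' <= u -> u < v -> v <= v' -> RInt f u v <= RInt f u' v'.
Proof.
  intros Hc Hp H1 H2 H3 H4.
  rewrite <- (RInt_Chasles f u' u v') by (apply C0_ex_RInt; [exact Hc|lra|lra]).
  rewrite <- (RInt_Chasles f u v v') by (apply C0_ex_RInt; [exact Hc|lra|lra]).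
  assert (0 <= RInt f u' u).
  { apply RInt_ge_0; [lra| apply C0_ex_RInt; [exact Hc|lra|lra] | intros; apply Hp; lra]. }
  assert (0 <= RInt f v v').
  { apply RInt_ge_0; [lra| apply C0_ex_RInt; [exact Hc|lra|lra] | intros; apply Hp; lra]. }
  rewrite !plusR. unfold plus; simpl. lra.
Qed.

Lemma IG_prefix f l : C0 f -> (forall t, 0 < t -> 0 <= f t) -> IG f l ->
  forall u v, 0 < u -> u < v -> RInt f u v <= l.
Proof.
  intros Hc Hp H u v Hu Huv.
  destruct (Rle_lt_dec (RInt f u v) l) as [|Hlt]; [auto|exfalso].
  destruct (IG_elim f l H (RInt f u v - l)) as (u0 & v0 & Hu0 & Hb); [lra|].
  set (u' := Rmin u u0 / 2). set (v' := Rmax v v0 + 1).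
  assert (Hu1 : 0 < u' < u0 /\ u' <= u).
  { unfold u'. pose proof (Rmin_l u u0). pose proof (Rmin_r u u0).
    assert (0 < Rmin u u0) by (apply Rmin_glb_lt; lra). lra. }
  assert (Hv1 : v0 < v' /\ v <= v').
  { unfold v'. pose proof (Rmax_l v v0). pose proof (Rmax_r v v0). lra. }
  destruct (Hb u' v') as (y & Hy & Hy2); [lra|lra|].
  apply (is_RInt_unique (V:=R_CompleteNormedModule)) in Hy. subst y.
  pose proof (RInt_mono_dom f u v u' v' Hc Hp ltac:(lra) ltac:(lra) Huv ltac:(lra)).
  apply Rabs_def2 in Hy2. lra.
Qed.

Lemma IG_minus f g lf lg : IG f lf -> IG g lg -> IG (fun t => f t - g t) (lf - lg).
Proof. intros Hf Hg. exact (is_RInt_gen_minus f g lf lg Hf Hg). Qed.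
Lemma IG_plus f g lf lg : IG f lf -> IG g lg -> IG (fun t => f t + g t) (lf + lg).
Proof. intros Hf Hg. exact (is_RInt_gen_plus f g lf lg Hf Hg). Qed.
Lemma IG_scal k f lf : IG f lf -> IG (fun t => k * f t) (k * lf).
Proof. intros Hf. exact (is_RInt_gen_scal f k lf Hf). Qed.

Lemma IG_ext f g l : (forall t, 0 < t -> f t = g t) -> IG f l -> IG g l.
Proof.
  intros He H. apply (is_RInt_gen_ext f g l); [|exact H].
  apply Filter_prod with (fun u => 0 < u) (fun v => 0 < v).
  - exists (mkposreal 1 Rlt_0_1). intros; auto.
  - exists 0. auto.
  - intros u v Hu Hv t Ht. simpl in Ht. apply He.
    pose proof (Rmin_glb_lt u v 0). destruct Ht as [Ht _].
    assert (0 < Rmin u v) by (apply Rmin_glb_lt; lra). lra.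
Qed.

Lemma IG_unique f l : IG f l -> RInt_gen f (at_right 0) (Rbar_locally p_infty) = l.
Proof. intros H. apply is_RInt_gen_unique. exact H. Qed.

Lemma C0_minus f g : C0 f -> C0 g -> C0 (fun t => f t - g t).
Proof. intros Hf Hg t Ht. apply (continuous_minus f g); auto. Qed.

Lemma IG_le f g lf lg : C0 f -> C0 g -> IG f lf -> IG g lg ->
  (forall t, 0 < t -> f t <= g t) -> lf <= lg.
Proof.
  intros Cf Cg Hf Hg Hle.
  pose proof (IG_minus g f lg lf Hg Hf) as H.
  pose proof (IG_prefix _ _ (C0_minus g f Cg Cf) ltac:(intros t Ht; specialize (Hle t Ht); lra) H 1 2 Rlt_0_1 ltac:(lra)).
  assert (0 <= RInt (fun t => g t - f t) 1 2).
  { apply RInt_ge_0; [lra| apply C0_ex_RInt; [apply C0_minus; auto|lra|lra]|].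
    intros t Ht. specialize (Hle t ltac:(lra)). lra. }
  lra.
Qed.

Lemma IG_lt f g lf lg : C0 f -> C0 g -> IG f lf -> IG g lg ->
  (forall t, 0 < t -> f t < g t) -> lf < lg.
Proof.
  intros Cf Cg Hf Hg Hle.
  pose proof (IG_minus g f lg lf Hg Hf) as H.
  pose proof (IG_prefix _ _ (C0_minus g f Cg Cf) ltac:(intros t Ht; specialize (Hle t Ht); lra) H 1 2 Rlt_0_1 ltac:(lra)).
  assert (0 < RInt (fun t => g t - f t) 1 2).
  { apply RInt_gt_0; [lra| |].
    - intros t Ht. specialize (Hle t ltac:(lra)). lra.
    - intros t Ht. apply C0_minus; auto; lra. }
  lra.
Qed.

Lemma IG_dom f g lg : C0 f -> C0 g -> (forall t, 0 < t -> 0 <= f t <= g t) ->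
  IG g lg -> exists lf, IG f lf.
Proof.
  intros Cf Cg Hfg Hg.
  set (E := fun r => exists u v, 0 < u /\ u < v /\ r = RInt f u v).
  assert (HE : forall u v, 0 < u -> u < v -> RInt f u v <= lg).
  { intros u v Hu Huv.
    apply Rle_trans with (RInt g u v).
    - apply RInt_le; [lra|apply C0_ex_RInt; auto; lra|apply C0_ex_RInt; auto; lra|].
      intros t Ht; apply Hfg; lra.
    - apply (IG_prefix g lg Cg); auto. intros t Ht; specialize (Hfg t Ht); lra. }
  destruct (completeness E) as [L [HL1 HL2]].
  { exists lg. intros r (u & v & Hu & Huv & ->). auto. }
  { exists (RInt f 1 2). exists 1, 2. repeat split; lra. }
  exists L. apply IG_intro.
  - intros u v Hu Huv. apply C0_ex_RInt; auto; lra.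
  - intros eps Heps.
    destruct (classic (exists r, E r /\ L - eps < r)) as [[r [Hr1 Hr2]]|Hn].
    + destruct Hr1 as (u0 & v0 & Hu0 & Huv0 & ->).
      exists u0, v0. repeat split; auto.
      intros u v Hu Hv.
      assert (RInt f u v <= L) by (apply HL1; exists u, v; repeat split; lra).
      assert (RInt f u0 v0 <= RInt f u v).
      { apply RInt_mono_dom; auto; try lra. intros t Ht; apply Hfg; auto. }
      rewrite Rabs_left1; lra.
    + exfalso. assert (L <= L - eps); [|lra].
      apply HL2. intros r Hr. destruct (Rle_lt_dec r (L - eps)); auto.
      exfalso; apply Hn; exists r; auto.
Qed.

Lemma IG_FTC F f L0 L1 : (forall t, 0 < t -> is_derive F t (f t)) -> C0 f ->
  filterlim F (at_right 0) (locally L0) ->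
  filterlim F (Rbar_locally p_infty) (locally L1) -> IG f (L1 - L0).
Proof.
  intros Hd Hc H0 H1.
  apply IG_ext with (Derive F).
  { intros t Ht. apply is_derive_unique, Hd, Ht. }
  assert (Hpos : filter_prod (at_right 0) (Rbar_locally p_infty)
     (fun ab => forall x, Rmin (fst ab) (snd ab) <= x <= Rmax (fst ab) (snd ab) -> 0 < x)).
  { apply Filter_prod with (fun u => 0 < u) (fun v => 0 < v).
    - exists (mkposreal 1 Rlt_0_1). intros; auto.
    - exists 0. auto.
    - intros u v Hu Hv t Ht. simpl in Ht.
      assert (0 < Rmin u v) by (apply Rmin_glb_lt; lra). lra. }
  apply is_RInt_gen_Derive; auto.
  - eapply filter_imp; [|exact Hpos]. intros [u v] H x Hx. exists (f x). apply Hd, (H x Hx).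
  - eapply filter_imp; [|exact Hpos]. intros [u v] H x Hx.
    specialize (H x Hx).
    apply continuous_ext_loc with f; [|apply Hc; auto].
    exists (mkposreal x H). intros y Hy. assert (Hy' : Rabs (y - x) < x) by exact Hy.
    apply Rabs_def2 in Hy'.
    symmetry. apply is_derive_unique, Hd. lra.
Qed.

Lemma lim_right0 F L C : (forall t, 0 < t < 1 -> Rabs (F t - L) <= C * sqrt t) ->
  filterlim F (at_right 0) (locally L).
Proof.
  intros H P [eps HP].
  set (C' := Rabs C + 1).
  assert (HC' : 0 < C') by (unfold C'; pose proof (Rabs_pos C); lra).
  set (d := Rmin 1 ((eps / C') * (eps / C'))).
  assert (Hd : 0 < d).
  { apply Rmin_glb_lt; [lra|]. assert (0 < eps / C') by (apply Rdiv_lt_0_compat; [apply cond_pos|lra]). nra. }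
  exists (mkposreal d Hd). intros t Ht Ht0. assert (Ht' : Rabs (t - 0) < d) by exact Ht. clear Ht. rename Ht' into Ht.
  rewrite Rminus_0_r, Rabs_pos_eq in Ht by lra.
  apply HP. change (Rabs (F t - L) < eps).
  assert (Ht1 : t < 1) by (pose proof (Rmin_l 1 ((eps / C') * (eps / C'))); unfold d in Ht; lra).
  specialize (H t (conj Ht0 Ht1)).
  assert (Hs : sqrt t < eps / C').
  { assert (0 < eps / C') by (apply Rdiv_lt_0_compat; [apply cond_pos|lra]).
    rewrite <- (sqrt_Rsqr (eps / C')) by lra. apply sqrt_lt_1_alt. split; [lra|].
    unfold Rsqr. pose proof (Rmin_r 1 ((eps / C') * (eps / C'))). unfold d in Ht. lra. }
  assert (C * sqrt t <= C' * sqrt t).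
  { apply Rmult_le_compat_r; [apply sqrt_pos|]. unfold C'. pose proof (Rle_abs C). lra. }
  assert (C' * sqrt t < eps).
  { replace (pos eps) with (C' * (eps / C')) by (field; lra). apply Rmult_lt_compat_l; lra. }
  lra.
Qed.

Lemma lim_pinfty F L C M : (forall t, M < t -> 0 < t -> Rabs (F t - L) <= C / sqrt t) ->
  filterlim F (Rbar_locally p_infty) (locally L).
Proof.
  intros H P [eps HP].
  set (C' := Rabs C + 1).
  assert (HC' : 0 < C') by (unfold C'; pose proof (Rabs_pos C); lra).
  assert (He : 0 < eps) by apply cond_pos.
  set (N := Rmax M ((C' / eps) * (C' / eps))).
  exists (Rmax N 1). intros t Ht.
  pose proof (Rmax_l N 1). pose proof (Rmax_r N 1).
  pose proof (Rmax_l M ((C' / eps) * (C' / eps))). pose proof (Rmax_r M ((C' / eps) * (C' / eps))).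
  fold N in H2, H3.
  apply HP. change (Rabs (F t - L) < eps).
  specialize (H t ltac:(lra) ltac:(lra)).
  assert (Hs : C' / eps < sqrt t).
  { assert (0 < C' / eps) by (apply Rdiv_lt_0_compat; lra).
    rewrite <- (sqrt_Rsqr (C' / eps)) by lra. apply sqrt_lt_1_alt. split.
    - unfold Rsqr; nra.
    - unfold Rsqr. lra. }
  assert (Hst : 0 < sqrt t) by (apply sqrt_lt_R0; lra).
  assert (C / sqrt t <= C' / sqrt t).
  { unfold Rdiv. apply Rmult_le_compat_r; [left; apply Rinv_0_lt_compat; lra|]. unfold C'. pose proof (Rle_abs C). lra. }
  assert (C' / sqrt t < eps).
  { apply Rmult_lt_reg_r with (sqrt t); auto. unfold Rdiv. rewrite Rmult_assoc, Rinv_l by lra.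
    apply Rmult_lt_reg_r with (/ eps). apply Rinv_0_lt_compat; lra.
    rewrite Rmult_1_r. rewrite (Rmult_comm eps), Rmult_assoc, Rinv_r, Rmult_1_r by lra. exact Hs. }
  lra.
Qed.

Lemma atan_le_id x : 0 <= x -> 0 <= atan x <= x.
Proof.
  intros Hx. destruct (Req_dec x 0) as [->|Hx0].
  { rewrite atan_0; lra. }
  split.
  - rewrite <- atan_0. left. apply atan_increasing. lra.
  - destruct (MVT_cor2 atan (fun c => / (1 + c²)) 0 x) as (c & Hc & Hc2); [lra| |].
    + intros c _. apply is_derive_Reals. apply is_derive_atan.
    + rewrite atan_0 in Hc. rewrite Rminus_0_r in Hc. rewrite Hc.
      assert (0 < / (1 + c²) <= 1).
      { assert (1 <= 1 + c²) by (pose proof (Rle_0_sqr c); lra).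
        split. apply Rinv_0_lt_compat; lra.
        rewrite <- Rinv_1. apply Rinv_le_contravar; lra. }
      nra.
Qed.

Lemma C0_of_derive f : (forall t, 0 < t -> ex_derive f t) -> C0 f.
Proof. intros H t Ht. exact (ex_derive_continuous (K:=R_AbsRing) (V:=R_NormedModule) f t (H t Ht)). Qed.

Lemma sqrt_sq_pos t : 0 < t -> sqrt t * sqrt t = t /\ 0 < sqrt t.
Proof. intros. split; [apply sqrt_sqrt; lra| apply sqrt_lt_R0; lra]. Qed.

Definition fB c t := / sqrt t * / (t + c).

Lemma C0_fB c : 0 <= c -> C0 (fB c).
Proof.
  intros Hc. apply C0_of_derive. intros t Ht. unfold fB.
  destruct (sqrt_sq_pos t Ht).
  auto_derive. repeat split; lra.
Qed.

Lemma IG_B c : 0 < c -> IG (fB c) (PI / sqrt c).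
Proof.
  intros Hc. destruct (sqrt_sq_pos c Hc) as [Hc1 Hc2].
  replace (PI / sqrt c) with (PI / sqrt c - 0) by ring.
  apply IG_FTC with (F := fun t => 2 / sqrt c * atan (sqrt t / sqrt c)).
  - intros t Ht. destruct (sqrt_sq_pos t Ht) as [Ht1 Ht2].
    auto_derive; [lra|]. unfold fB.
    set (s := sqrt t) in *. set (q := sqrt c) in *.
    rewrite <- Ht1, <- Hc1. field. split; [|lra].
    nra.
  - apply C0_fB; lra.
  - apply lim_right0 with (C := 2 / (sqrt c * sqrt c)).
    intros t Ht. destruct (sqrt_sq_pos t ltac:(lra)) as [Ht1 Ht2].
    assert (H0 : 0 <= sqrt t / sqrt c) by (apply Rdiv_le_0_compat; lra).
    destruct (atan_le_id _ H0).
    rewrite Rminus_0_r, Rabs_pos_eq.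
    + apply Rle_trans with (2 / sqrt c * (sqrt t / sqrt c)).
      * apply Rmult_le_compat_l; auto. apply Rdiv_le_0_compat; lra.
      * right. field. lra.
    + apply Rmult_le_pos; auto. apply Rdiv_le_0_compat; lra.
  - apply lim_pinfty with (C := 2) (M := 0).
    intros t _ Ht. destruct (sqrt_sq_pos t ltac:(lra)) as [Ht1 Ht2].
    assert (Hx : 0 < sqrt t / sqrt c) by (apply Rdiv_lt_0_compat; lra).
    pose proof (atan_inv _ Hx) as Hi.
    replace (/ (sqrt t / sqrt c)) with (sqrt c / sqrt t) in Hi by (field; lra).
    assert (H0 : 0 <= sqrt c / sqrt t) by (apply Rdiv_le_0_compat; lra).
    destruct (atan_le_id _ H0).
    replace (2 / sqrt c * atan (sqrt t / sqrt c) - PI / sqrt c)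
      with (- (2 / sqrt c * atan (sqrt c / sqrt t))) by (rewrite Hi; field; lra).
    rewrite Rabs_Ropp, Rabs_pos_eq.
    + apply Rle_trans with (2 / sqrt c * (sqrt c / sqrt t)).
      * apply Rmult_le_compat_l; auto. apply Rdiv_le_0_compat; lra.
      * right. field. lra.
    + apply Rmult_le_pos; auto. apply Rdiv_le_0_compat; lra.
Qed.

Definition fK c e t := / sqrt t * / (t + c) * / (t + e).

Lemma C0_fK c e : 0 <= c -> 0 <= e -> C0 (fK c e).
Proof.
  intros Hc He. apply C0_of_derive. intros t Ht. unfold fK.
  destruct (sqrt_sq_pos t Ht).
  auto_derive. repeat split; lra.
Qed.

Lemma IG_K c e : 0 < c -> 0 < e ->
  IG (fK c e) (PI / (sqrt c * sqrt e * (sqrt c + sqrt e))).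
Proof.
  intros Hc He. destruct (sqrt_sq_pos c Hc) as [Hc1 Hc2].
  destruct (sqrt_sq_pos e He) as [He1 He2].
  destruct (Req_dec c e) as [<-|Hne].
  - replace (PI / (sqrt c * sqrt c * (sqrt c + sqrt c))) with
      (PI / (2 * (c * sqrt c)) - 0) by (rewrite Hc1; field; lra).
    apply IG_FTC with (F := fun t => sqrt t / (c * (t + c)) + atan (sqrt t / sqrt c) / (c * sqrt c)).
    + intros t Ht. destruct (sqrt_sq_pos t Ht) as [Ht1 Ht2].
      auto_derive; [repeat split; nra|]. unfold fK.
      set (s := sqrt t) in *. set (q := sqrt c) in *.
      rewrite <- Ht1, <- Hc1. field. repeat split; nra.
    + apply C0_fK; lra.
    + apply lim_right0 with (C := 1 / (c * c) + 1 / (c * sqrt c * sqrt c)).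
      intros t Ht. destruct (sqrt_sq_pos t ltac:(lra)) as [Ht1 Ht2].
      assert (H0 : 0 <= sqrt t / sqrt c) by (apply Rdiv_le_0_compat; lra).
      destruct (atan_le_id _ H0).
      assert (0 <= sqrt t / (c * (t + c)) <= sqrt t / (c * c)).
      { split. apply Rdiv_le_0_compat; nra.
        unfold Rdiv. apply Rmult_le_compat_l; [lra|]. apply Rinv_le_contravar; nra. }
      assert (0 <= atan (sqrt t / sqrt c) / (c * sqrt c) <= (sqrt t / sqrt c) / (c * sqrt c)).
      { split. apply Rdiv_le_0_compat; nra.
        unfold Rdiv at 1. unfold Rdiv at 2. apply Rmult_le_compat_r; [|lra].
        left; apply Rinv_0_lt_compat; nra. }
      rewrite Rminus_0_r, Rabs_pos_eq by lra.
      replace ((1 / (c * c) + 1 / (c * sqrt c * sqrt c)) * sqrt t) with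
        (sqrt t / (c * c) + (sqrt t / sqrt c) / (c * sqrt c)) by (field; lra).
      lra.
    + apply lim_pinfty with (C := 1 / c + 1 / c) (M := 0).
      intros t _ Ht. destruct (sqrt_sq_pos t ltac:(lra)) as [Ht1 Ht2].
      assert (Hx : 0 < sqrt t / sqrt c) by (apply Rdiv_lt_0_compat; lra).
      pose proof (atan_inv _ Hx) as Hi.
      replace (/ (sqrt t / sqrt c)) with (sqrt c / sqrt t) in Hi by (field; lra).
      assert (H0 : 0 <= sqrt c / sqrt t) by (apply Rdiv_le_0_compat; lra).
      destruct (atan_le_id _ H0).
      replace (sqrt t / (c * (t + c)) + atan (sqrt t / sqrt c) / (c * sqrt c) - PI / (2 * (c * sqrt c)))
        with (sqrt t / (c * (t + c)) - atan (sqrt c / sqrt t) / (c * sqrt c)) by (rewrite Hi; field; lra).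
      assert (0 <= sqrt t / (c * (t + c)) <= 1 / c / sqrt t).
      { split. apply Rdiv_le_0_compat; nra.
        replace (1 / c / sqrt t) with (sqrt t / (c * (sqrt t * sqrt t))) by (field; lra). rewrite Ht1.
        unfold Rdiv. apply Rmult_le_compat_l; [lra|]. apply Rinv_le_contravar; nra. }
      assert (0 <= atan (sqrt c / sqrt t) / (c * sqrt c) <= 1 / c / sqrt t).
      { split. apply Rdiv_le_0_compat; nra.
        apply Rle_trans with ((sqrt c / sqrt t) / (c * sqrt c)).
        unfold Rdiv at 1. unfold Rdiv at 2. apply Rmult_le_compat_r; [|lra].
        left; apply Rinv_0_lt_compat; nra.
        right; field; lra. }
      apply Rabs_le. split; unfold Rdiv in *; lra.
  - apply IG_ext with (fun t => / (e - c) * (fB c t - fB e t)).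
    + intros t Ht. unfold fB, fK. destruct (sqrt_sq_pos t Ht). field.
      repeat split; try lra.
    + replace (PI / (sqrt c * sqrt e * (sqrt c + sqrt e))) with
        (/ (e - c) * (PI / sqrt c - PI / sqrt e)).
      * apply IG_scal, IG_minus; apply IG_B; auto.
      * replace (e - c) with (sqrt e * sqrt e - sqrt c * sqrt c) by lra.
        field. repeat split; try lra.
Qed.

Definition gg x y := sqrt (x * y).
Definition hh x y t := / gg x y - / sqrt ((t + x) * (t + y)).
Definition h0 x y t := / gg x y - / (t + gg x y).

Lemma gg_facts x y : 0 < x -> 0 < y ->
  gg x y * gg x y = x * y /\ 0 < gg x y /\ gg x y <= (x + y) / 2 /\
  (x <> y -> gg x y < (x + y) / 2).
Proof.
  intros Hx Hy. unfold gg.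
  destruct (sqrt_sq_pos (x * y) ltac:(nra)) as [H1 H2].
  repeat split; auto.
  - set (g := sqrt (x*y)) in *. destruct (Rle_lt_dec g ((x+y)/2)); auto.
    pose proof (Rle_0_sqr (x - y)) as Hsq. unfold Rsqr in Hsq.
    assert ((x+y)/2 * ((x+y)/2) < g * g) by (apply Rmult_le_0_lt_compat; lra). nra.
  - intros Hne. set (g := sqrt (x*y)) in *.
    assert (0 < (x - y) * (x - y)) by (apply Rsqr_pos_lt; lra).
    destruct (Rle_lt_dec ((x+y)/2) g); [|auto].
    assert ((x+y)/2 * ((x+y)/2) <= g * g) by (apply Rmult_le_compat; lra). nra.
Qed.

Lemma sqrtQ_facts x y t : 0 < x -> 0 < y -> 0 < t ->
  let R := sqrt ((t + x) * (t + y)) in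
  R * R = (t + x) * (t + y) /\ t + gg x y <= R /\ (x <> y -> t + gg x y < R).
Proof.
  intros Hx Hy Ht R.
  destruct (gg_facts x y Hx Hy) as (G1 & G2 & G3 & G4).
  destruct (sqrt_sq_pos ((t + x) * (t + y)) ltac:(nra)) as [H1 H2].
  fold R in H1, H2.
  set (g := gg x y) in *.
  split; [auto|split].
  - destruct (Rle_lt_dec (t + g) R); auto. nra.
  - intros Hne. specialize (G4 Hne).
    destruct (Rle_lt_dec R (t + g)); auto. nra.
Qed.

Lemma h_bounds x y t : 0 < x -> 0 < y -> 0 < t ->
  0 < h0 x y t /\ h0 x y t <= hh x y t /\ hh x y t <= (x + y) / 2 / gg x y * h0 x y t /\
  (x <> y -> h0 x y t < hh x y t /\ hh x y t < (x + y) / 2 / gg x y * h0 x y t).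
Proof.
  intros Hx Hy Ht.
  destruct (gg_facts x y Hx Hy) as (G1 & G2 & G3 & G4).
  destruct (sqrtQ_facts x y t Hx Hy Ht) as (R1 & R2 & R3).
  unfold hh, h0.
  set (R := sqrt ((t + x) * (t + y))) in *.
  set (g := gg x y) in *.
  set (a := (x + y) / 2) in *.
  assert (HR : R * R = t * t + 2 * a * t + g * g) by (unfold a; nra).
  assert (Rp : 0 < R) by lra.
  assert (Hh0 : / g - / (t + g) = t / (g * (t + g))) by (field; lra).
  assert (Hh : / g - / R = t * (t + 2 * a) / (g * R * (R + g))).
  { assert (E : t * (t + 2 * a) = (R - g) * (R + g)) by lra.
    rewrite E. field. lra. }
  assert (K : forall A B C D, 0 < B -> 0 < D -> A * D <= C * B -> A / B <= C / D).
  { intros A B C D HB HD HK.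
    replace (A/B) with (A*D * /(B*D)) by (field; lra). replace (C/D) with (C*B * /(B*D)) by (field; lra).
    apply Rmult_le_compat_r; [left; apply Rinv_0_lt_compat; nra | lra]. }
  assert (Ks : forall A B C D, 0 < B -> 0 < D -> A * D < C * B -> A / B < C / D).
  { intros A B C D HB HD HK.
    replace (A/B) with (A*D * /(B*D)) by (field; lra). replace (C/D) with (C*B * /(B*D)) by (field; lra).
    apply Rmult_lt_compat_r; [apply Rinv_0_lt_compat; nra | lra]. }
  assert (E1 : a * (R * R + g * R) - g * (t + 2 * a) * (t + g) >= (a - g) * t * t + (a - g) * (2 * a + g) * t).
  { assert (a * g * R >= a * g * (t + g)).
    { apply Rle_ge. apply Rmult_le_compat_l; [nra|lra]. }
    nra. }
  split; [|split; [|split]].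
  - rewrite Hh0. apply Rdiv_lt_0_compat; nra.
  - assert (/ R <= / (t + g)) by (apply Rinv_le_contravar; lra). lra.
  - rewrite Hh0, Hh. replace (a / g * (t / (g * (t + g)))) with ((a * t) / (g * g * (t + g))) by (field; lra).
    apply K; [repeat (apply Rmult_lt_0_compat || apply Rplus_lt_0_compat); lra|repeat (apply Rmult_lt_0_compat || apply Rplus_lt_0_compat); lra|].
    assert (0 <= (a - g) * t * t) by (apply Rmult_le_pos; [apply Rmult_le_pos|]; lra).
    assert (0 <= (a - g) * (2 * a + g) * t) by (apply Rmult_le_pos; [apply Rmult_le_pos|]; lra).
    assert (g * (t + 2 * a) * (t + g) <= a * (R * (R + g))) by lra.
    assert (t * (t + 2 * a) * (g * (t + g)) <= a * t * (R * (R + g))).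
    { replace (t * (t + 2 * a) * (g * (t + g))) with (t * (g * (t + 2 * a) * (t + g))) by ring.
      replace (a * t * (R * (R + g))) with (t * (a * (R * (R + g)))) by ring.
      apply Rmult_le_compat_l; lra. }
    assert (g * (t*(t+2*a)*(g*(t+g))) <= g * (a*t*(R*(R+g)))) by (apply Rmult_le_compat_l; lra). lra.
  - intros Hne. specialize (G4 Hne). specialize (R3 Hne). split.
    + assert (/ R < / (t + g)) by (apply Rinv_lt_contravar; nra). lra.
    + rewrite Hh0, Hh. replace (a / g * (t / (g * (t + g)))) with ((a * t) / (g * g * (t + g))) by (field; lra).
      apply Ks; [repeat (apply Rmult_lt_0_compat || apply Rplus_lt_0_compat); lra|repeat (apply Rmult_lt_0_compat || apply Rplus_lt_0_compat); lra|].
      assert (0 < (a - g) * t * t) by (apply Rmult_lt_0_compat; [apply Rmult_lt_0_compat|]; lra).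
    assert (0 < (a - g) * (2 * a + g) * t) by (apply Rmult_lt_0_compat; [apply Rmult_lt_0_compat|]; lra).
    assert (g * (t + 2 * a) * (t + g) < a * (R * (R + g))) by lra.
    assert (t * (t + 2 * a) * (g * (t + g)) < a * t * (R * (R + g))).
    { replace (t * (t + 2 * a) * (g * (t + g))) with (t * (g * (t + 2 * a) * (t + g))) by ring.
      replace (a * t * (R * (R + g))) with (t * (a * (R * (R + g)))) by ring.
      apply Rmult_lt_compat_l; lra. }
      assert (g * (t*(t+2*a)*(g*(t+g))) < g * (a*t*(R*(R+g)))) by (apply Rmult_lt_compat_l; lra). lra.
Qed.

Ltac mpos := repeat (apply Rmult_le_pos); lra.

Lemma poly_up t z p : 0 <= z -> 0 < p -> (z + 2 * p) / 6 < t ->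
  (t + z) * (t + p) * (t + p) * ((2 * t - (z + 2 * p) / 3) * (2 * t - (z + 2 * p) / 3))
  < 4 * (t * t * t) * ((t + (z + 2 * p) / 3) * (t + (z + 2 * p) / 3)).
Proof.
  intros Hz Hp Ht.
  set (u := t - (z + 2 * p) / 6).
  assert (Hu : 0 < u) by (unfold u; lra).
  replace t with (u + (z + 2 * p) / 6) by (unfold u; ring).
  assert (E : 4 * ((u + (z + 2 * p) / 6) * (u + (z + 2 * p) / 6) * (u + (z + 2 * p) / 6)) *
      ((u + (z + 2 * p) / 6 + (z + 2 * p) / 3) * (u + (z + 2 * p) / 6 + (z + 2 * p) / 3))
      - (u + (z + 2 * p) / 6 + z) * (u + (z + 2 * p) / 6 + p) * (u + (z + 2 * p) / 6 + p) *
      ((2 * (u + (z + 2 * p) / 6) - (z + 2 * p) / 3) * (2 * (u + (z + 2 * p) / 6) - (z + 2 * p) / 3))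
      = ((4/27)*p*p*p*p*p + (10/27)*z*p*p*p*p + (10/27)*z*z*p*p*p + (5/27)*z*z*z*p*p + (5/108)*z*z*z*z*p + (1/216)*z*z*z*z*z) + u * ((44/27)*p*p*p*p + (88/27)*z*p*p*p + (22/9)*z*z*p*p + (22/27)*z*z*z*p + (11/108)*z*z*z*z) + u * u * ((40/9)*p*p*p + (4/3)*z*p*p + (3)*z*z*p + (13/18)*z*z*z) + u * u * u * ((8/3)*p*p + (-4/3)*z*p + (5/3)*z*z)).
  { field. }
  assert (H0 : 0 < ((4/27)*p*p*p*p*p + (10/27)*z*p*p*p*p + (10/27)*z*z*p*p*p + (5/27)*z*z*z*p*p + (5/108)*z*z*z*z*p + (1/216)*z*z*z*z*z)).
  { 
    assert (0 < p*p*p*p*p) by (repeat apply Rmult_lt_0_compat; lra).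
    assert (0 <= z*p*p*p*p) by mpos. assert (0 <= z*z*p*p*p) by mpos.
    assert (0 <= z*z*z*p*p) by mpos. assert (0 <= z*z*z*z*p) by mpos.
    assert (0 <= z*z*z*z*z) by mpos. lra. }
  assert (H1 : 0 <= ((44/27)*p*p*p*p + (88/27)*z*p*p*p + (22/9)*z*z*p*p + (22/27)*z*z*z*p + (11/108)*z*z*z*z)).
  { 
    assert (0 <= p*p*p*p) by mpos. assert (0 <= z*p*p*p) by mpos.
    assert (0 <= z*z*p*p) by mpos. assert (0 <= z*z*z*p) by mpos.
    assert (0 <= z*z*z*z) by mpos. lra. }
  assert (H2 : 0 <= ((40/9)*p*p*p + (4/3)*z*p*p + (3)*z*z*p + (13/18)*z*z*z)).
  { 
    assert (0 <= p*p*p) by mpos. assert (0 <= z*p*p) by mpos.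
    assert (0 <= z*z*p) by mpos. assert (0 <= z*z*z) by mpos. lra. }
  assert (H3 : 0 <= ((8/3)*p*p + (-4/3)*z*p + (5/3)*z*z)).
  {  nra. }
  assert (0 <= u * ((44/27)*p*p*p*p + (88/27)*z*p*p*p + (22/9)*z*z*p*p + (22/27)*z*z*z*p + (11/108)*z*z*z*z)) by mpos.
  assert (0 <= u * u * ((40/9)*p*p*p + (4/3)*z*p*p + (3)*z*z*p + (13/18)*z*z*z)) by mpos.
  assert (0 <= u * u * u * ((8/3)*p*p + (-4/3)*z*p + (5/3)*z*z)) by mpos.
  lra.
Qed.

Definition Afun x y g a t :=
  -2 * (g - g * g / sqrt ((t + x) * (t + y))) / sqrt t + 4 * a * sqrt t / sqrt ((t + x) * (t + y)).

Definition fH x y g t := / (t * sqrt t) * (/ g - / sqrt ((t + x) * (t + y))).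
Definition fRG x y t := / sqrt ((t + x) * (t + y) * (t + 0)) * (x / (t + x) + y / (t + y) + 0 / (t + 0)) * t.

Lemma Afun_deriv x y g a t : 0 < x -> 0 < y -> 0 < t -> 0 < g -> g * g = x * y -> a = (x + y) / 2 ->
  is_derive (Afun x y g a) t (x * y * fH x y g t - fRG x y t).
Proof.
  intros Hx Hy Ht Hg Hgg Ha. unfold Afun.
  destruct (sqrt_sq_pos t Ht) as [Hs1 Hs2].
  destruct (sqrt_sq_pos ((t + x) * (t + y)) ltac:(nra)) as [HR1 HR2].
  auto_derive; [repeat split; nra|].
  unfold fH, fRG.
  replace (t + 0) with t by ring.
  rewrite (sqrt_mult ((t + x) * (t + y)) t) by nra.
  replace (x / (t + x) + y / (t + y) + 0 / t) with ((2 * (x * y) + t * (x + y)) / ((t + x) * (t + y)))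
    by (field; repeat split; nra).
  replace (1 * (t + y) + (t + x) * 1) with (2 * (t + a)) by lra.
  replace (x + y) with (2 * a) by lra.
  rewrite <- Hgg.
  set (s := sqrt t) in *. set (R := sqrt ((t + x) * (t + y))) in *.
  assert (HRa : R * R = t * t + 2 * a * t + g * g) by (rewrite HR1, Ha, Hgg; field).
  rewrite <- HR1.
  clear HR1. clearbody s R. subst t.
  assert (Ea : a = (R * R - s * s * (s * s) - g * g) / (2 * (s * s))) by (rewrite HRa; field; lra).
  clear HRa Ha. subst a.
  field. repeat split; lra.
Qed.

Definition fw z c t := / sqrt (t + z) * / (t + c).

Lemma C0_fw z c : 0 <= z -> 0 < c -> C0 (fw z c).
Proof.
  intros Hz Hc. apply C0_of_derive. intros t Ht. unfold fw.
  destruct (sqrt_sq_pos (t + z) ltac:(lra)).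
  auto_derive. repeat split; lra.
Qed.

Lemma fw_bounds z c t : 0 <= z -> 0 < c -> 0 < t -> 0 < fw z c t <= fB c t.
Proof.
  intros Hz Hc Ht. unfold fw, fB.
  destruct (sqrt_sq_pos (t + z) ltac:(lra)) as [H1 H2].
  destruct (sqrt_sq_pos t Ht) as [H3 H4].
  assert (sqrt t <= sqrt (t + z)) by (apply sqrt_le_1_alt; lra).
  split.
  - apply Rmult_lt_0_compat; apply Rinv_0_lt_compat; lra.
  - apply Rmult_le_compat_r; [left; apply Rinv_0_lt_compat; lra|].
    apply Rinv_le_contravar; lra.
Qed.

Lemma IG_fw z c : 0 <= z -> 0 < c -> exists l, IG (fw z c) l.
Proof.
  intros Hz Hc. apply IG_dom with (fB c) (PI / sqrt c).
  - apply C0_fw; auto.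
  - apply C0_fB; lra.
  - intros t Ht. destruct (fw_bounds z c t Hz Hc Ht). lra.
  - apply IG_B; auto.
Qed.

Lemma C0_mult f g : C0 f -> C0 g -> C0 (fun t => f t * g t).
Proof. intros Hf Hg t Ht. apply (continuous_mult f g); auto. Qed.
Lemma C0_scal k f : C0 f -> C0 (fun t => k * f t).
Proof. intros Hf t Ht. apply (continuous_mult (fun _ => k) f); auto. apply continuous_const. Qed.
Lemma C0_const k : C0 (fun _ => k).
Proof. intros t Ht. apply continuous_const. Qed.

Lemma C0_hh x y : 0 < x -> 0 < y -> C0 (hh x y).
Proof.
  intros Hx Hy. apply C0_of_derive. intros t Ht. unfold hh.
  destruct (gg_facts x y Hx Hy) as (G1 & G2 & _).
  destruct (sqrt_sq_pos ((t + x) * (t + y)) ltac:(nra)).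
  auto_derive. repeat split; nra.
Qed.

Lemma C0_h0 x y : 0 < x -> 0 < y -> C0 (h0 x y).
Proof.
  intros Hx Hy. apply C0_of_derive. intros t Ht. unfold h0.
  destruct (gg_facts x y Hx Hy) as (G1 & G2 & _).
  auto_derive. repeat split; lra.
Qed.

Definition i32 t := / (t * sqrt t).

Lemma C0_i32 : C0 i32.
Proof.
  apply C0_of_derive. intros t Ht. unfold i32.
  destruct (sqrt_sq_pos t Ht).
  auto_derive. repeat split; nra.
Qed.

Lemma IG_uniq f l1 l2 : IG f l1 -> IG f l2 -> l1 = l2.
Proof. intros H1 H2. rewrite <- (IG_unique f l1 H1). apply IG_unique; auto. Qed.

Lemma sq_lt X Y : 0 <= X -> 0 <= Y -> X * X < Y * Y -> X < Y.
Proof. intros. destruct (Rlt_le_dec X Y); auto. nra. Qed.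

Lemma div_lt A B C D : 0 < B -> 0 < D -> A * D < C * B -> A / B < C / D.
Proof.
  intros HB HD HK.
  replace (A/B) with (A*D * /(B*D)) by (field; lra). replace (C/D) with (C*B * /(B*D)) by (field; lra).
  apply Rmult_lt_compat_r; [apply Rinv_0_lt_compat; nra | lra].
Qed.
Lemma div_le A B C D : 0 < B -> 0 < D -> A * D <= C * B -> A / B <= C / D.
Proof.
  intros HB HD HK.
  replace (A/B) with (A*D * /(B*D)) by (field; lra). replace (C/D) with (C*B * /(B*D)) by (field; lra).
  apply Rmult_le_compat_r; [left; apply Rinv_0_lt_compat; nra | lra].
Qed.

Lemma P2 z p t : 0 <= z -> 0 < p -> 0 < t ->
  fw z p t < fB (sqrt (3 * p * (p + 2 * z)) / 2) t.
Proof.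
  intros Hz Hp Ht. unfold fw, fB.
  set (b := sqrt (3 * p * (p + 2 * z)) / 2).
  destruct (sqrt_sq_pos (3 * p * (p + 2 * z)) ltac:(nra)) as [Hb1 Hb2].
  assert (Hbb : b * b = 3 * p * (p + 2 * z) / 4) by (replace (b * b) with (sqrt (3 * p * (p + 2 * z)) * sqrt (3 * p * (p + 2 * z)) / 4) by (unfold b; field); rewrite Hb1; field).
  assert (Hb : 0 < b) by (unfold b; lra).
  assert (H2b : 2 * b <= z + 2 * p).
  { destruct (Rle_lt_dec (2 * b) (z + 2 * p)); auto.
    assert ((z + 2 * p) * (z + 2 * p) < (2 * b) * (2 * b)) by (apply Rmult_le_0_lt_compat; lra).
    assert (0 <= (z - p) * (z - p)) by (pose proof (Rle_0_sqr (z - p)); unfold Rsqr in *; lra).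
    nra. }
  destruct (sqrt_sq_pos (t + z) ltac:(lra)) as [H1 H2].
  destruct (sqrt_sq_pos t Ht) as [H3 H4].
  set (r := sqrt (t + z)) in *. set (s := sqrt t) in *.
  rewrite <- !Rinv_mult.
  apply Rinv_lt_contravar; [apply Rmult_lt_0_compat; nra|].
  apply sq_lt; try nra.
  assert (0 <= (z + 2 * p - 2 * b) * t * t) by (apply Rmult_le_pos; [apply Rmult_le_pos|]; lra).
  assert (0 < t * (p * p + 2 * p * z - b * b)) by (apply Rmult_lt_0_compat; nra).
  assert (0 <= z * p * p) by (apply Rmult_le_pos; [apply Rmult_le_pos|]; lra).
  replace (s * (t + b) * (s * (t + b))) with (t * ((t + b) * (t + b))) by (rewrite <- H3; ring).
  replace (r * (t + p) * (r * (t + p))) with ((t + z) * ((t + p) * (t + p))) by (rewrite <- H1; ring).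
  nra.
Qed.

Lemma P3 z p t : 0 <= z -> 0 < p -> 0 < t ->
  (2 * t - (z + 2 * p) / 3) / (2 * (t * sqrt t) * (t + (z + 2 * p) / 3)) < fw z p t.
Proof.
  intros Hz Hp Ht. unfold fw.
  set (d := (z + 2 * p) / 3).
  destruct (sqrt_sq_pos (t + z) ltac:(lra)) as [H1 H2].
  destruct (sqrt_sq_pos t Ht) as [H3 H4].
  assert (Hd : 0 < d) by (unfold d; lra).
  assert (Hfw : 0 < / sqrt (t + z) * / (t + p)) by (apply Rmult_lt_0_compat; apply Rinv_0_lt_compat; lra).
  destruct (Rle_lt_dec (2 * t - d) 0) as [Hn|Hpos].
  - assert ((2 * t - d) / (2 * (t * sqrt t) * (t + d)) <= 0); [|lra].
    unfold Rdiv. apply Rmult_le_0_r; [lra|]. left; apply Rinv_0_lt_compat.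
    apply Rmult_lt_0_compat; [nra|lra].
  - pose proof (poly_up t z p Hz Hp ltac:(unfold d in Hpos; lra)) as Hpoly. fold d in Hpoly.
    set (r := sqrt (t + z)) in *. set (s := sqrt t) in *.
    rewrite <- Rinv_mult.
    assert (Hk : r * (t + p) * (2 * t - d) < 2 * (t * s) * (t + d)).
    { apply sq_lt.
      - apply Rmult_le_pos; [apply Rmult_le_pos|]; lra.
      - apply Rmult_le_pos; [apply Rmult_le_pos|]; nra.
      - replace (r * (t + p) * (2 * t - d) * (r * (t + p) * (2 * t - d))) with
           ((t + z) * (t + p) * (t + p) * ((2 * t - d) * (2 * t - d))) by (rewrite <- H1; ring).
        assert (E2 : 2 * (t * s) * (t + d) * (2 * (t * s) * (t + d)) = 4 * (t * t) * (s * s) * ((t + d) * (t + d))) by ring.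
        rewrite H3 in E2. rewrite E2. lra. }
    assert (0 < r * (t + p)) by nra.
    assert (0 < 2 * (t * s) * (t + d)) by (apply Rmult_lt_0_compat; nra).
    replace (/ (r * (t + p))) with (1 / (r * (t + p))) by (field; lra).
    apply div_lt; auto. lra.
Qed.

Lemma C0_invs c : 0 <= c -> C0 (fun t => / (t + c)).
Proof. intros Hc. apply C0_of_derive. intros t Ht. auto_derive. lra. Qed.

Lemma C0_invsQ x y : 0 < x -> 0 < y -> C0 (fun t => / sqrt ((t + x) * (t + y))).
Proof.
  intros Hx Hy. apply C0_of_derive. intros t Ht.
  destruct (sqrt_sq_pos ((t + x) * (t + y)) ltac:(nra)).
  auto_derive. repeat split; nra.
Qed.

Lemma C0_fRG x y : 0 < x -> 0 < y -> C0 (fRG x y).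
Proof.
  intros Hx Hy. apply C0_of_derive. intros t Ht. unfold fRG.
  destruct (sqrt_sq_pos ((t + x) * (t + y) * (t + 0)) ltac:(replace (t+0) with t by ring; apply Rmult_lt_0_compat; nra)).
  auto_derive. repeat split; try nra.
Qed.

Lemma IG_zero : IG (fun _ => 0) 0.
Proof.
  pose proof (IG_scal 0 _ _ (IG_B 1 Rlt_0_1)) as H.
  rewrite Rmult_0_l in H. apply (IG_ext _ _ _ (fun t _ => Rmult_0_l _) H).
Qed.

Lemma RC_val z c l : IG (fw z c) l -> RC z c = / 2 * l.
Proof.
  intros H. unfold RC, int0inf.
  change (fun t => / sqrt (t + z) * / (t + c)) with (fw z c).
  rewrite (IG_unique _ _ H). reflexivity.
Qed.

Lemma Afun_bounds x y t : 0 < x -> 0 < y -> 0 < t ->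
  let g := gg x y in let a := (x + y) / 2 in
  let R := sqrt ((t + x) * (t + y)) in
  0 <= 2 * (g - g * g / R) / sqrt t /\
  2 * (g - g * g / R) / sqrt t <= (t + 2 * a) / g * sqrt t /\
  2 * (g - g * g / R) / sqrt t <= 2 * g / sqrt t /\
  0 <= 4 * a * sqrt t / R /\ 4 * a * sqrt t / R <= 4 * a / g * sqrt t /\
  4 * a * sqrt t / R <= 4 * a / sqrt t.
Proof.
  intros Hx Hy Ht g a R.
  destruct (gg_facts x y Hx Hy) as (G1 & G2 & G3 & G4).
  destruct (sqrtQ_facts x y t Hx Hy Ht) as (R1 & R2 & R3).
  fold g R in G1, G2, G3, R1, R2. fold a in G3.
  destruct (sqrt_sq_pos t Ht) as [S1 S2].
  set (s := sqrt t) in *.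
  assert (HR : R * R = t * t + 2 * a * t + g * g) by (rewrite R1; unfold a; rewrite G1; field).
  assert (Hk : g - g * g / R = g * (R - g) / R) by (field; lra).
  assert (HRg : R - g = t * (t + 2 * a) / (R + g)).
  { apply Rmult_eq_reg_r with (R + g); [|lra]. field_simplify; try lra; try nra. }
  assert (Ha : 0 < a) by (unfold a; lra).
  repeat split.
  - rewrite Hk. apply Rdiv_le_0_compat; [|lra]. apply Rmult_le_pos; [lra|].
    apply Rdiv_le_0_compat; [apply Rmult_le_pos; lra|lra].
  - rewrite Hk, HRg.
    apply Rle_trans with (2 * (t * (t + 2 * a) / (2 * g)) / s).
    + unfold Rdiv. apply Rmult_le_compat_r; [left; apply Rinv_0_lt_compat; lra|].
      apply Rmult_le_compat_l; [lra|].
      apply Rle_trans with (t * (t + 2 * a) * / (R + g)).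
      * replace (g * (t * (t + 2 * a) * / (R + g)) * / R) with ((t * (t + 2 * a) * / (R + g)) * (g / R)) by (field; lra).
        rewrite <- (Rmult_1_r (t * (t + 2 * a) * / (R + g))) at 2.
        apply Rmult_le_compat_l.
        -- apply Rmult_le_pos; [nra|left; apply Rinv_0_lt_compat; lra].
        -- apply Rmult_le_reg_r with R; [lra|]. unfold Rdiv. rewrite Rmult_assoc, Rinv_l; lra.
      * apply Rmult_le_compat_l; [nra|]. apply Rinv_le_contravar; lra.
    + right. rewrite <- S1. field. lra.
  - apply Rmult_le_compat_r; [left; apply Rinv_0_lt_compat; lra|].
    assert (0 <= g * g / R) by (apply Rdiv_le_0_compat; nra). lra.
  - apply Rdiv_le_0_compat; [|lra]. apply Rmult_le_pos; lra.
  - replace (4 * a / g * s) with (4 * a * s / g) by (field; lra). apply div_le; try lra.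
    apply Rmult_le_compat_l; [apply Rmult_le_pos; lra | lra].
  - apply Rle_trans with (4 * a * s / t).
    + unfold Rdiv. apply Rmult_le_compat_l; [apply Rmult_le_pos; lra|].
      apply Rinv_le_contravar; lra.
    + right. rewrite <- S1. field. lra.
Qed.

Lemma IG_RG x y lH : 0 < x -> 0 < y -> IG (fH x y (gg x y)) lH ->
  RG x y 0 = x * y / 4 * lH.
Proof.
  intros Hx Hy HH.
  destruct (gg_facts x y Hx Hy) as (G1 & G2 & G3 & G4).
  set (g := gg x y) in *. set (a := (x + y) / 2).
  assert (HF : IG (fun t => x * y * fH x y g t - fRG x y t) (0 - 0)).
  { apply IG_FTC with (F := Afun x y g a).
    - intros t Ht. apply Afun_deriv; auto.
    - apply C0_minus; [apply C0_scal|apply C0_fRG; auto].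
      intros t Ht. apply (C0_mult i32 (hh x y)); [apply C0_i32|apply C0_hh|]; auto.
    - apply lim_right0 with (C := (1 + 2 * a) / g + 4 * a / g).
      intros t Ht. destruct (Afun_bounds x y t Hx Hy ltac:(lra)) as (A1 & A2 & A3 & A4 & A5 & A6).
      fold g a in A1, A2, A3, A4, A5, A6.
      unfold Afun. rewrite Rminus_0_r.
      assert ((t + 2 * a) / g * sqrt t <= (1 + 2 * a) / g * sqrt t).
      { apply Rmult_le_compat_r; [apply sqrt_pos|]. unfold Rdiv. apply Rmult_le_compat_r; [left; apply Rinv_0_lt_compat; lra|lra]. }
      replace ((1 + 2 * a) / g + 4 * a / g) with ((1 + 2 * a) / g + 4 * a / g) by ring.
      apply Rabs_le. unfold Rdiv in *. split; nra.
    - apply lim_pinfty with (C := 2 * g + 4 * a) (M := 0).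
      intros t _ Ht. destruct (Afun_bounds x y t Hx Hy Ht) as (A1 & A2 & A3 & A4 & A5 & A6).
      fold g a in A1, A2, A3, A4, A5, A6.
      unfold Afun. rewrite Rminus_0_r.
      apply Rabs_le. unfold Rdiv in *. split; nra. }
  assert (HG : IG (fRG x y) (x * y * lH)).
  { pose proof (IG_minus _ _ _ _ (IG_scal (x * y) _ _ HH) HF) as H2.
    replace (x * y * lH - (0 - 0)) with (x * y * lH) in H2 by ring.
    eapply IG_ext; [|exact H2]. intros t Ht. simpl. ring. }
  unfold RG, int0inf. change (fun t => / sqrt ((t + x) * (t + y) * (t + 0)) * (x / (t + x) + y / (t + y) + 0 / (t + 0)) * t) with (fRG x y).
  rewrite (IG_unique _ _ HG). field.
Qed.

Lemma div_ge1 A B : 0 < B -> B <= A -> 1 <= A / B.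
Proof. intros. apply Rmult_le_reg_r with B; auto. unfold Rdiv. rewrite Rmult_assoc, Rinv_l; lra. Qed.
Lemma div_gt1 A B : 0 < B -> B < A -> 1 < A / B.
Proof. intros. apply Rmult_lt_reg_r with B; auto. unfold Rdiv. rewrite Rmult_assoc, Rinv_l; lra. Qed.
Lemma div_lek A B k : 0 < B -> A <= k * B -> A / B <= k.
Proof. intros. apply Rmult_le_reg_r with B; auto. unfold Rdiv. rewrite Rmult_assoc, Rinv_l; lra. Qed.
Lemma div_ltk A B k : 0 < B -> A < k * B -> A / B < k.
Proof. intros. apply Rmult_lt_reg_r with B; auto. unfold Rdiv. rewrite Rmult_assoc, Rinv_l; lra. Qed.

Theorem mainTheorem13 (x y z p : R) :
  0 < x -> 0 < y -> 0 <= z -> 0 < p ->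
  let a := (x + y) / 2 in
  let g := sqrt (x * y) in
  let b := sqrt (3 * p * (p + 2 * z)) / 2 in
  let d := (z + 2 * p) / 3 in
  (exists theta : R,
      1 <= theta <= a / g /\
      (theta = 1 <-> x = y) /\ (theta = a / g <-> x = y) /\
      (g <> p ->
         RJ x y z p = 3 / g * RC z p
                      - 3 * theta / (g - p) * (RC z g - p / g * RC z p)) /\
      (z = 0 ->
         RJ x y 0 p = 3 * PI / (2 * sqrt (x * y * p))
                      * (1 - theta * sqrt p / (sqrt g + sqrt p)))) /\
  (exists theta' : R,
      sqrt b / (1 + sqrt (b / g)) < theta' /\
      theta' < 3 * a / (2 * g) * (sqrt d / (1 + sqrt (d / g))) /\
      RJ x y z p = 3 / g * RC z p - 6 / (x * y) * RG x y 0
                   + 3 * PI * theta' / (2 * x * y)).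
Proof.
  intros Hx Hy Hz Hp a g b d.
  assert (Eg : g = gg x y) by reflexivity. clearbody g. subst g.
  assert (Ea : a = (x + y) / 2) by reflexivity. clearbody a.
  destruct (gg_facts x y Hx Hy) as (G1 & G2 & G3 & G4).
  set (g := gg x y) in *. rewrite <- Ea in G3, G4.
  assert (Ha : 0 < a) by lra.
  destruct (IG_fw z p Hz Hp) as [lw Hlw].
  destruct (IG_fw z g Hz G2) as [lwg Hlwg].
  assert (Cw : C0 (fw z p)) by (apply C0_fw; auto).
  destruct (IG_dom (fun t => fw z p t * / (t + g)) (fK p g) _
     (C0_mult _ _ Cw (C0_invs g ltac:(lra))) (C0_fK p g ltac:(lra) ltac:(lra))
     ltac:(intros t Ht; destruct (fw_bounds z p t Hz Hp Ht); unfold fK, fB in *;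
           assert (0 < / (t + g)) by (apply Rinv_0_lt_compat; lra);
           split; [nra|]; apply Rmult_le_compat_r; lra)
     (IG_K p g Hp G2)) as [lw1 Hlw1].
  assert (CJ : C0 (fun t => fw z p t * / sqrt ((t + x) * (t + y))))
    by (apply C0_mult; [exact Cw| apply C0_invsQ; auto]).
  destruct (IG_dom (fun t => fw z p t * / sqrt ((t + x) * (t + y))) (fun t => / g * fw z p t) _
     CJ (C0_scal _ _ Cw)
     ltac:(intros t Ht; destruct (fw_bounds z p t Hz Hp Ht);
           destruct (sqrtQ_facts x y t Hx Hy Ht) as (R1 & R2 & R3); fold g in R2;
           assert (0 < / sqrt ((t + x) * (t + y)) <= / g) by
             (split; [apply Rinv_0_lt_compat; lra| apply Rinv_le_contravar; lra]);
           split; [apply Rmult_le_pos; lra|];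
           replace (/ g * fw z p t) with (fw z p t * / g) by ring; apply Rmult_le_compat_l; lra)
     (IG_scal (/ g) _ _ Hlw)) as [lJ HlJ].
  assert (CH : C0 (fH x y g)).
  { intros t Ht. apply (C0_mult i32 (hh x y)); [apply C0_i32|apply C0_hh|]; auto. }
  destruct (IG_dom (fH x y g) (fun t => a / (g * g) * fB g t) _
     CH (C0_scal _ _ (C0_fB g ltac:(lra)))
     ltac:(intros t Ht; destruct (h_bounds x y t Hx Hy Ht) as (H1 & H2 & H3 & _);
           rewrite <- Ea in H3; fold g in H1, H2, H3;
           destruct (sqrt_sq_pos t Ht) as [S1 S2];
           assert (E : i32 t * h0 x y t = / g * fB g t) by
             (unfold i32, h0, fB; fold g; field; repeat split; lra);
           assert (0 < i32 t) by (unfold i32; apply Rinv_0_lt_compat; nra);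
           change (fH x y g t) with (i32 t * hh x y t);
           split; [nra|];
           replace (a / (g * g) * fB g t) with (i32 t * (a / g * h0 x y t)) by
             (rewrite Rmult_comm, Rmult_assoc, (Rmult_comm (h0 x y t)), E; field; lra);
           apply Rmult_le_compat_l; lra)
     (IG_scal (a / (g * g)) _ _ (IG_B g G2))) as [lH HlH].
  assert (HRCp : RC z p = / 2 * lw) by (apply RC_val; auto).
  assert (HRCg : RC z g = / 2 * lwg) by (apply RC_val; auto).
  assert (HRJ : RJ x y z p = 3 / 2 * lJ).
  { unfold RJ, int0inf. rewrite (IG_unique _ lJ); [reflexivity|].
    eapply IG_ext; [|exact HlJ]. intros t Ht. unfold fw.
    rewrite (sqrt_mult ((t + x) * (t + y)) (t + z)) by nra.
    destruct (sqrt_sq_pos (t + z) ltac:(lra)). destruct (sqrt_sq_pos ((t + x) * (t + y)) ltac:(nra)).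
    field. repeat split; lra. }
  assert (HRG : RG x y 0 = x * y / 4 * lH) by (apply IG_RG; auto).
  set (I0 := / g * lw - lw1).
  set (I1 := / g * lw - lJ).
  assert (HI0 : IG (fun t => fw z p t * h0 x y t) I0).
  { eapply IG_ext; [|exact (IG_minus _ _ _ _ (IG_scal (/ g) _ _ Hlw) Hlw1)].
    intros t Ht. unfold h0. fold g. simpl. ring. }
  assert (HI1 : IG (fun t => fw z p t * hh x y t) I1).
  { eapply IG_ext; [|exact (IG_minus _ _ _ _ (IG_scal (/ g) _ _ Hlw) HlJ)].
    intros t Ht. unfold hh. fold g. simpl. ring. }
  assert (C0I0 : C0 (fun t => fw z p t * h0 x y t)) by (apply C0_mult; [exact Cw|apply C0_h0; auto]).
  assert (C0I1 : C0 (fun t => fw z p t * hh x y t)) by (apply C0_mult; [exact Cw|apply C0_hh; auto]).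
  assert (I0pos : 0 < I0).
  { apply (IG_lt _ _ _ _ (C0_const 0) C0I0 IG_zero HI0).
    intros t Ht. destruct (fw_bounds z p t Hz Hp Ht). destruct (h_bounds x y t Hx Hy Ht) as (H1 & _).
    apply Rmult_lt_0_compat; lra. }
  assert (I01 : I0 <= I1).
  { apply (IG_le _ _ _ _ C0I0 C0I1 HI0 HI1).
    intros t Ht. destruct (fw_bounds z p t Hz Hp Ht). destruct (h_bounds x y t Hx Hy Ht) as (H1 & H2 & _).
    apply Rmult_le_compat_l; lra. }
  assert (I10 : I1 <= a / g * I0).
  { apply (IG_le _ _ _ _ C0I1 (C0_scal _ _ C0I0) HI1 (IG_scal _ _ _ HI0)).
    intros t Ht. destruct (fw_bounds z p t Hz Hp Ht). destruct (h_bounds x y t Hx Hy Ht) as (H1 & H2 & H3 & _).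
    rewrite <- Ea in H3. fold g in H3.
    replace (a / g * (fw z p t * h0 x y t)) with (fw z p t * (a / g * h0 x y t)) by ring.
    apply Rmult_le_compat_l; lra. }
  assert (Istrict : x <> y -> I0 < I1 /\ I1 < a / g * I0).
  { intros Hne. split.
    - apply (IG_lt _ _ _ _ C0I0 C0I1 HI0 HI1).
      intros t Ht. destruct (fw_bounds z p t Hz Hp Ht). destruct (h_bounds x y t Hx Hy Ht) as (H1 & H2 & H3 & H4).
      destruct (H4 Hne). apply Rmult_lt_compat_l; lra.
    - apply (IG_lt _ _ _ _ C0I1 (C0_scal _ _ C0I0) HI1 (IG_scal _ _ _ HI0)).
      intros t Ht. destruct (fw_bounds z p t Hz Hp Ht). destruct (h_bounds x y t Hx Hy Ht) as (H1 & H2 & H3 & H4).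
      destruct (H4 Hne) as [K1 K2]. rewrite <- Ea in K2. fold g in K2.
      replace (a / g * (fw z p t * h0 x y t)) with (fw z p t * (a / g * h0 x y t)) by ring.
      apply Rmult_lt_compat_l; lra. }
  assert (Ieq : x = y -> I1 = I0).
  { intros Hxy. subst y. apply (IG_uniq (fun t => fw z p t * h0 x x t)); [|exact HI0].
    eapply IG_ext; [|exact HI1]. intros t Ht. unfold hh, h0.
    replace ((t + x) * (t + x)) with ((t + x) * (t + x)) by ring.
    rewrite sqrt_square by lra. unfold gg. rewrite sqrt_square by lra. fold (gg x x). reflexivity. }
  assert (Hag : x = y -> a / g = 1).
  { intros Hxy. subst y. rewrite Ea. unfold g, gg. rewrite sqrt_square by lra. field. lra. }
  assert (HPI := PI_RGT_0).
  split.
  - exists (I1 / I0).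
    assert (T1 : 1 <= I1 / I0) by (apply div_ge1; auto).
    assert (T2 : I1 / I0 <= a / g) by (apply div_lek; auto).
    split; [split; auto|split; [|split; [|split]]].
    + split.
      * intros Hth. destruct (Req_dec x y) as [|Hne]; auto. exfalso.
        destruct (Istrict Hne). assert (1 < I1 / I0) by (apply div_gt1; auto). lra.
      * intros Hxy. rewrite (Ieq Hxy). field. lra.
    + split.
      * intros Hth. destruct (Req_dec x y) as [|Hne]; auto. exfalso.
        destruct (Istrict Hne). assert (I1 / I0 < a / g) by (apply div_ltk; auto). lra.
      * intros Hxy. rewrite (Hag Hxy), (Ieq Hxy). field. lra.
    + intros Hgp.
      assert (Hl1 : lw1 = / (g - p) * (lw - lwg)).
      { apply (IG_uniq (fun t => fw z p t * / (t + g))); [exact Hlw1|].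
        eapply IG_ext; [|exact (IG_scal (/ (g - p)) _ _ (IG_minus _ _ _ _ Hlw Hlwg))].
        intros t Ht. unfold fw. simpl. destruct (sqrt_sq_pos (t + z) ltac:(lra)).
        field. repeat split; try lra. }
      set (th := I1 / I0).
      assert (Hth : I1 = th * I0) by (unfold th; field; lra).
      clearbody th.
      rewrite HRJ, HRCp, HRCg.
      replace lJ with (/ g * lw - th * I0) by (unfold I1 in Hth; lra).
      unfold I0. rewrite Hl1. field. split; [|lra]. intro; apply Hgp; lra.
    + intros Hz0. subst z.
      assert (Hlw' : lw = PI / sqrt p).
      { apply (IG_uniq (fw 0 p)); [exact Hlw|].
        eapply IG_ext; [|exact (IG_B p Hp)]. intros t Ht. unfold fw, fB. rewrite Rplus_0_r. reflexivity. }
      assert (Hlw1' : lw1 = PI / (sqrt p * sqrt g * (sqrt p + sqrt g))).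
      { apply (IG_uniq (fun t => fw 0 p t * / (t + g))); [exact Hlw1|].
        eapply IG_ext; [|exact (IG_K p g Hp G2)]. intros t Ht. unfold fw, fK. rewrite Rplus_0_r. reflexivity. }
      set (th := I1 / I0).
      assert (Hth : I1 = th * I0) by (unfold th; field; lra).
      clearbody th.
      rewrite HRJ.
      replace lJ with (/ g * lw - th * I0) by (unfold I1 in Hth; lra).
      unfold I0. rewrite Hlw', Hlw1'.
      rewrite (sqrt_mult (x * y) p) by nra.
      change (sqrt (x * y)) with g.
      destruct (sqrt_sq_pos g G2) as [Sg1 Sg2].
      destruct (sqrt_sq_pos p Hp) as [Sp1 Sp2].
      set (sg := sqrt g) in *. set (sp := sqrt p) in *.
      rewrite <- Sg1. field. repeat split; lra.
  -
    set (L0 := / g * (PI / sqrt g) - I0).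
    assert (Hpos_i32 : forall t, 0 < t -> 0 < i32 t - fw z p t).
    { intros t Ht. destruct (fw_bounds z p t Hz Hp Ht) as [F1 F2].
      destruct (sqrt_sq_pos t Ht) as [S1 S2].
      assert (fB p t < i32 t).
      { unfold fB, i32. rewrite Rinv_mult. rewrite Rmult_comm.
        apply Rmult_lt_compat_r; [apply Rinv_0_lt_compat; lra|]. apply Rinv_lt_contravar; nra. }
      lra. }
    assert (CF : C0 (fun t => i32 t - fw z p t)) by (apply C0_minus; [apply C0_i32|exact Cw]).
    assert (CFh0 : C0 (fun t => (i32 t - fw z p t) * h0 x y t)) by (apply C0_mult; [exact CF|apply C0_h0; auto]).
    assert (CFhh : C0 (fun t => (i32 t - fw z p t) * hh x y t)) by (apply C0_mult; [exact CF|apply C0_hh; auto]).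
    assert (HL0 : IG (fun t => (i32 t - fw z p t) * h0 x y t) L0).
    { eapply IG_ext; [|exact (IG_minus _ _ _ _ (IG_scal (/ g) _ _ (IG_B g G2)) HI0)].
      intros t Ht. destruct (sqrt_sq_pos t Ht). unfold i32, h0, fB. fold g. field. repeat split; lra. }
    assert (HJF : IG (fun t => (i32 t - fw z p t) * hh x y t) (lH - I1)).
    { eapply IG_ext; [|exact (IG_minus _ _ _ _ HlH HI1)].
      intros t Ht. cbv beta. change (fH x y g t) with (i32 t * hh x y t). ring. }
    assert (J1 : L0 <= lH - I1).
    { apply (IG_le _ _ _ _ CFh0 CFhh HL0 HJF). intros t Ht.
      destruct (h_bounds x y t Hx Hy Ht) as (H1 & H2 & _).
      apply Rmult_le_compat_l; [left; apply Hpos_i32; auto|lra]. }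
    assert (J2 : lH - I1 <= a / g * L0).
    { apply (IG_le _ _ _ _ CFhh (C0_scal _ _ CFh0) HJF (IG_scal _ _ _ HL0)). intros t Ht.
      destruct (h_bounds x y t Hx Hy Ht) as (H1 & H2 & H3 & _). rewrite <- Ea in H3. fold g in H3.
      replace (a / g * ((i32 t - fw z p t) * h0 x y t)) with ((i32 t - fw z p t) * (a / g * h0 x y t)) by ring.
      apply Rmult_le_compat_l; [left; apply Hpos_i32; auto|lra]. }
    assert (Hb : 0 < b).
    { unfold b. apply Rdiv_lt_0_compat; [apply sqrt_lt_R0; nra|lra]. }
    assert (Hd : 0 < d) by (unfold d; lra).
    assert (J3 : b / g * (PI / (sqrt b * sqrt g * (sqrt b + sqrt g))) < L0).
    { apply (IG_lt _ _ _ _ (C0_scal _ _ (C0_fK b g ltac:(lra) ltac:(lra))) CFh0 (IG_scal _ _ _ (IG_K b g Hb G2)) HL0).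
      intros t Ht. pose proof (P2 z p t Hz Hp Ht) as HP2. fold b in HP2.
      destruct (h_bounds x y t Hx Hy Ht) as (H1 & _).
      destruct (sqrt_sq_pos t Ht) as [S1 S2].
      assert (E : b / g * fK b g t = (i32 t - fB b t) * h0 x y t).
      { unfold fK, i32, fB, h0. fold g. field. repeat split; lra. }
      rewrite E. apply Rmult_lt_compat_r; lra. }
    assert (J4 : L0 < 3 / 2 * (d / g) * (PI / (sqrt d * sqrt g * (sqrt d + sqrt g)))).
    { apply (IG_lt _ _ _ _ CFh0 (C0_scal _ _ (C0_fK d g ltac:(lra) ltac:(lra))) HL0 (IG_scal _ _ _ (IG_K d g Hd G2))).
      intros t Ht. pose proof (P3 z p t Hz Hp Ht) as HP3. fold d in HP3.
      destruct (h_bounds x y t Hx Hy Ht) as (H1 & _).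
      destruct (sqrt_sq_pos t Ht) as [S1 S2].
      assert (E : 3 / 2 * (d / g) * fK d g t = (i32 t - (2 * t - d) / (2 * (t * sqrt t) * (t + d))) * h0 x y t).
      { unfold fK, i32, h0. fold g. field. repeat split; lra. }
      rewrite E. apply Rmult_lt_compat_r; lra. }
    exists (x * y / PI * (lH - I1)).
    destruct (sqrt_sq_pos g G2) as [Sg1 Sg2].
    destruct (sqrt_sq_pos b Hb) as [Sb1 Sb2].
    destruct (sqrt_sq_pos d Hd) as [Sd1 Sd2].
    assert (Hxy : 0 < x * y / PI) by (apply Rdiv_lt_0_compat; nra).
    split; [|split].
    + rewrite sqrt_div_alt by lra.
      replace (sqrt b / (1 + sqrt b / sqrt g)) with (x * y / PI * (b / g * (PI / (sqrt b * sqrt g * (sqrt b + sqrt g))))).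
      * apply Rlt_le_trans with (x * y / PI * L0).
        -- apply Rmult_lt_compat_l; auto.
        -- apply Rmult_le_compat_l; lra.
      * rewrite <- G1. set (sg := sqrt g) in *. set (sb := sqrt b) in *.
        rewrite <- Sg1, <- Sb1. field. repeat split; nra.
    + rewrite sqrt_div_alt by lra.
      replace (3 * a / (2 * g) * (sqrt d / (1 + sqrt d / sqrt g))) with
        (x * y / PI * (a / g * (3 / 2 * (d / g) * (PI / (sqrt d * sqrt g * (sqrt d + sqrt g)))))).
      * apply Rle_lt_trans with (x * y / PI * (a / g * L0)).
        -- apply Rmult_le_compat_l; lra.
        -- apply Rmult_lt_compat_l; auto. apply Rmult_lt_compat_l; auto. apply Rdiv_lt_0_compat; lra.
      * rewrite <- G1. set (sg := sqrt g) in *. set (sd := sqrt d) in *.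
        rewrite <- Sg1, <- Sd1. field. repeat split; nra.
    + rewrite HRJ, HRCp, HRG. unfold I1. field. repeat split; lra.
Qed.
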